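(* Let $X$ and $\Lambda$ be nonempty sets, $f: X\to\mathbb{R}$ a function, and $(f_\lambda)_{\lambda\in\Lambda}$ a family of real-valued functions on $X$ such that $(f_\lambda(x))_{\lambda\in\Lambda}\in\ell^\infty(\Lambda)$ for each $x\in X$. Then the family $(f_\lambda-f)_{\lambda\in\Lambda}$ is infsup-convex on $X$ if and only if for every $\alpha\in\mathbb{R}$ satisfying $f(x)+\alpha\le\sup_{\lambda\in\Lambda}f_\lambda(x)$ for all $x\in X$, there exists $\Phi\in\Delta_\Lambda$ such that $f(x)+\alpha\le\Phi((f_\lambda(x))_{\lambda\in\Lambda})$ for all $x\in X$.
   Context: For a nonempty set $\Lambda$, $\ell^\infty(\Lambda)$ is the real Banach space of bounded real-valued functions on $\Lambda$ (sup-norm), $\ell^\infty(\Lambda)^*$ its topological dual, and $\Delta_\Lambda:=\{\Phi\in\ell^\infty(\Lambda)^*:\ \Phi(\varphi)\le\sup_{\lambda\in\Lambda}\varphi(\lambda)\ \forall\varphi\in\ell^\infty(\Lambda)\}$. Let $\Delta_m:=\{(t_1,\dots,t_m)\in\mathbb{R}^m: t_j\ge0,\ \sum_j t_j=1\}$. A family $(g_\lambda)_{\lambda\in\Lambda}$ of real-valued functions on a nonempty set $X$ is infsup-convex on $X$ if for all $m\ge1$, $\mathbf{t}\in\Delta_m$ and $x_1,\dots,x_m\in X$: $\inf_{x\in X}\sup_{\lambda\in\Lambda}g_\lambda(x)\le\sup_{\lambda\in\Lambda}\sum_{j=1}^m t_j g_\lambda(x_j)$. *)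

(* Defs.v *)
From HB Require Import structures.
From mathcomp Require Import all_boot all_order all_algebra.
From mathcomp Require Import all_classical all_reals.
From mathcomp Require Import ereal Rstruct.
Set Implicit Arguments. Unset Strict Implicit. Unset Printing Implicit Defensive.
Import Order.TTheory GRing.Theory Num.Theory.
Local Open Scope ring_scope.
Local Open Scope classical_set_scope.

Notation RR := Rdefinitions.R.

Definition supL (Lam : Type) (phi : Lam -> RR) : \bar RR :=
  ereal_sup (range (fun l => (phi l)%:E)).

Definition linfty (Lam : Type) (phi : Lam -> RR) : Prop :=
  exists M : RR, forall l, `|phi l| <= M.

(* Phi (a function on all of Lam -> R, only its restriction to l^oo(Lam)
   matters) is an element of the topological dual l^oo(Lam)^*:
   linear on l^oo(Lam) and bounded w.r.t. the sup-norm. *)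
Definition linfty_dual (Lam : Type) (Phi : (Lam -> RR) -> RR) : Prop :=
  (forall (a : RR) (phi psi : Lam -> RR), linfty phi -> linfty psi ->
      Phi (fun l => a * phi l + psi l) = a * Phi phi + Phi psi) /\
  (exists C : RR, forall (phi : Lam -> RR) (M : RR),
      (forall l, `|phi l| <= M) -> `|Phi phi| <= C * M).

Definition DeltaL (Lam : Type) (Phi : (Lam -> RR) -> RR) : Prop :=
  linfty_dual Phi /\
  forall phi : Lam -> RR, linfty phi -> ((Phi phi)%:E <= supL phi)%E.

Definition infsup_convex (X Lam : Type) (g : Lam -> X -> RR) : Prop :=
  forall (m : nat) (t : 'I_m -> RR) (xs : 'I_m -> X),
    (0 < m)%N -> (forall j, 0 <= t j) -> \sum_(j < m) t j = 1 ->
    (ereal_inf (range (fun x => supL (fun l => g l x)))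
       <= supL (fun l => (\sum_(j < m) t j * g l (xs j))%R))%E.

(* Main.v *)
Require Import Defs.
From mathcomp Require Import all_boot all_order all_algebra.
From mathcomp Require Import all_classical all_reals.
From mathcomp Require Import ereal Rstruct.
From mathcomp Require Import ring lra.
Import Order.TTheory GRing.Theory Num.Theory.
Local Open Scope ring_scope.
Local Open Scope classical_set_scope.
Set Implicit Arguments. Unset Strict Implicit. Unset Printing Implicit Defensive.

Definition vadd (Lam : Type) (x y : Lam -> RR) := fun l => x l + y l.
Definition vscl (Lam : Type) (a : RR) (x : Lam -> RR) := fun l => a * x l.
Definition vzero (Lam : Type) : Lam -> RR := fun _ => 0.

Definition sublin (Lam : Type) (q : (Lam -> RR) -> RR) :=
  (forall x y, linfty x -> linfty y -> q (vadd x y) <= q x + q y) /\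
  (forall a x, 0 < a -> linfty x -> q (vscl a x) <= a * q x).

Definition linL (Lam : Type) (q : (Lam -> RR) -> RR) :=
  forall a x y, linfty x -> linfty y -> q (fun l => a * x l + y l) = a * q x + q y.

Lemma linfty_add (Lam : Type) (x y : Lam -> RR) : linfty x -> linfty y -> linfty (vadd x y).
Proof.
move=> [M hM] [N hN]; exists (M + N) => l; rewrite /vadd.
by apply: (le_trans (ler_normD _ _)); apply: lerD.
Qed.

Lemma linfty_scl (Lam : Type) a (x : Lam -> RR) : linfty x -> linfty (vscl a x).
Proof.
move=> [M hM]; exists (`|a| * M) => l; rewrite /vscl normrM.
by apply: ler_wpM2l.
Qed.

Lemma linfty0 (Lam : Type) : linfty (@vzero Lam).
Proof. by exists 0 => l; rewrite /vzero normr0. Qed.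

Lemma sublin0 (Lam : Type) q : sublin q -> q (@vzero Lam) = 0.
Proof.
move=> [_ hh].
have e : forall a, vscl a (@vzero Lam) = @vzero Lam.
  by move=> a; apply: funext => l; rewrite /vscl /vzero mulr0.
have h2 := hh 2 _ ltac:(lra) (linfty0 Lam); rewrite e in h2.
have h3 := hh (1/2) _ ltac:(lra) (linfty0 Lam); rewrite e in h3.
lra.
Qed.

Lemma sublin_hom (Lam : Type) q a (x : Lam -> RR) : sublin q -> 0 <= a -> linfty x ->
  q (vscl a x) = a * q x.
Proof.
move=> hq; rewrite le_eqVlt => /orP[/eqP <-|ha] hx.
  have -> : vscl 0 x = @vzero Lam by apply: funext => l; rewrite /vscl mul0r.
  by rewrite sublin0 // mul0r.
apply/eqP; rewrite eq_le; apply/andP; split; first by apply hq.2.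
have h := hq.2 (a^-1) (vscl a x) ltac:(by rewrite invr_gt0) (linfty_scl a hx).
have e : vscl a^-1 (vscl a x) = x.
  by apply: funext => l; rewrite /vscl mulrA mulVf ?mul1r // gt_eqF.
rewrite e in h.
have : a * q x <= a * (a^-1 * q (vscl a x)) by rewrite ler_pM2l.
by rewrite mulrA mulfV ?mul1r // gt_eqF.
Qed.

Lemma sublin_neg (Lam : Type) q (x : Lam -> RR) : sublin q -> linfty x ->
  0 <= q x + q (vscl (-1) x).
Proof.
move=> hq hx; rewrite -(sublin0 hq).
have <- : vadd x (vscl (-1) x) = @vzero Lam.
  by apply: funext => l; rewrite /vadd /vscl /vzero; ring.
by apply hq.1 => //; apply: linfty_scl.
Qed.

Lemma inf_le_el (E : set RR) b r : (forall e, E e -> b <= e) -> E r -> inf E <= r.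
Proof. by move=> hb hr; apply: ge_inf => //; exists b. Qed.

Lemma le_inf_el (E : set RR) c : E !=set0 -> (forall e, E e -> c <= e) -> c <= inf E.
Proof. by move=> hn hc; apply: lb_le_inf. Qed.

Lemma le_inf_add (E1 E2 : set RR) c : E1 !=set0 -> E2 !=set0 ->
  (forall a b, E1 a -> E2 b -> c <= a + b) -> c <= inf E1 + inf E2.
Proof.
move=> h1 h2 h.
have h3 : forall b, E2 b -> c - b <= inf E1.
  by move=> b hb; apply: le_inf_el => // a ha; rewrite lerBlDr; apply: h.
have : c - inf E1 <= inf E2.
  by apply: le_inf_el => // b hb; rewrite lerBlDl addrC -lerBlDl; apply: h3.
by rewrite lerBlDl addrC.
Qed.

Lemma le_inf_scale (E : set RR) a c : 0 < a -> E !=set0 ->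
  (forall e, E e -> c <= a * e) -> c <= a * inf E.
Proof.
move=> ha hn h.
have : c / a <= inf E.
  by apply: le_inf_el => // e he; rewrite ler_pdivrMr // mulrC; apply: h.
by rewrite ler_pdivrMr // mulrC.
Qed.

Lemma min_sublin_odd (Lam : Type) (q : (Lam -> RR) -> RR) :
  sublin q ->
  (forall r, sublin r -> (forall x, linfty x -> r x <= q x) ->
     forall x, linfty x -> q x <= r x) ->
  forall y, linfty y -> q (vscl (-1) y) = - q y.
Proof.
move=> hq hmin y hy.
pose E x := [set q (vadd x (vscl t y)) - t * q y | t in [set t : RR | 0 <= t]].
pose qy x := inf (E x).
have Eel : forall x t, 0 <= t -> E x (q (vadd x (vscl t y)) - t * q y).
  by move=> x t ht; rewrite /E; exists t.
have En : forall x, E x !=set0.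
  by move=> x; exists (q (vadd x (vscl 0 y)) - 0 * q y); apply: Eel.
have Elb : forall x, linfty x -> forall e, E x e -> - q (vscl (-1) x) <= e.
  move=> x hx e [t ht <-].
  have e1 : vscl t y = vadd (vadd x (vscl t y)) (vscl (-1) x).
    by apply: funext => l; rewrite /vadd /vscl; ring.
  have := hq.1 _ _ (linfty_add hx (linfty_scl t hy)) (linfty_scl (-1) hx).
  rewrite -e1 sublin_hom //; lra.
have qy_le : forall x, linfty x -> qy x <= q x.
  move=> x hx; apply: (inf_le_el (Elb x hx)).
  have := Eel x 0 (lexx _).
  have -> : vadd x (vscl 0 y) = x by apply: funext => l; rewrite /vadd /vscl; ring.
  by rewrite mul0r subr0.
have sub : sublin qy.
  split.
  - move=> x1 x2 h1 h2; apply: le_inf_add => // a b [t1 ht1 <-] [t2 ht2 <-].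
    apply: (le_trans (inf_le_el (Elb _ (linfty_add h1 h2)) (Eel _ (t1 + t2) (addr_ge0 ht1 ht2)))).
    have e1 : vadd (vadd x1 x2) (vscl (t1 + t2) y) =
              vadd (vadd x1 (vscl t1 y)) (vadd x2 (vscl t2 y)).
      by apply: funext => l; rewrite /vadd /vscl; ring.
    rewrite e1.
    have := hq.1 _ _ (linfty_add h1 (linfty_scl t1 hy)) (linfty_add h2 (linfty_scl t2 hy)).
    lra.
  - move=> a x ha hx; apply: le_inf_scale => // e [t ht <-].
    have hat : 0 <= a * t by apply: mulr_ge0 => //; apply: ltW.
    apply: (le_trans (inf_le_el (Elb _ (linfty_scl a hx)) (Eel _ (a * t) hat))).
    have e1 : vadd (vscl a x) (vscl (a * t) y) = vscl a (vadd x (vscl t y)).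
      by apply: funext => l; rewrite /vadd /vscl; ring.
    rewrite e1 sublin_hom //; last by apply: linfty_add => //; apply: linfty_scl.
      by rewrite mulrBr mulrA.
    by apply: ltW.
have h1 := hmin qy sub qy_le _ (linfty_scl (-1) hy).
have h2 := inf_le_el (Elb _ (linfty_scl (-1) hy)) (Eel (vscl (-1) y) 1 ler01).
have e0 : vadd (vscl (-1) y) (vscl 1 y) = @vzero Lam.
  by apply: funext => l; rewrite /vadd /vscl /vzero; ring.
rewrite e0 sublin0 // in h2.
have h3 := sublin_neg hq hy.
rewrite /qy in h1; lra.
Qed.

Lemma odd_sublin_lin (Lam : Type) (q : (Lam -> RR) -> RR) :
  sublin q -> (forall y, linfty y -> q (vscl (-1) y) = - q y) -> linL q.
Proof.
move=> hq hodd.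
have hadd : forall x y, linfty x -> linfty y -> q (vadd x y) = q x + q y.
  move=> x y hx hy; apply/eqP; rewrite eq_le hq.1 //=.
  have e : vscl (-1) (vadd x y) = vadd (vscl (-1) x) (vscl (-1) y).
    by apply: funext => l; rewrite /vadd /vscl; ring.
  have := hodd _ (linfty_add hx hy); rewrite e.
  have := hq.1 _ _ (linfty_scl (-1) hx) (linfty_scl (-1) hy).
  rewrite hodd // hodd //; lra.
have hscl : forall a x, linfty x -> q (vscl a x) = a * q x.
  move=> a x hx; have [ha|ha] := leP 0 a; first exact: sublin_hom.
  have e : vscl a x = vscl (-1) (vscl (- a) x).
    by apply: funext => l; rewrite /vscl; ring.
  rewrite e hodd; last exact: linfty_scl.
  rewrite sublin_hom //; first by ring.
  by rewrite oppr_ge0 ltW.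
move=> a x y hx hy.
change (q (vadd (vscl a x) y) = a * q x + q y).
by rewrite hadd ?hscl //; apply: linfty_scl.
Qed.

Lemma hahn_banach (Lam : Type) (P : (Lam -> RR) -> RR) : sublin P ->
  exists Phi, linL Phi /\ forall x, linfty x -> Phi x <= P x.
Proof.
move=> hP.
pose Tp q := sublin q /\ (forall x : Lam -> RR, linfty x -> q x <= P x).
pose T := {q : (Lam -> RR) -> RR | Tp q}.
pose R : rel T := fun a b => `[< forall x, linfty x -> proj1_sig b x <= proj1_sig a x >].
have t0 : T by exists P; split => // x _; exact: lexx.
have [| | |t tmax] := @ZL_preorder T t0 R.
- by move=> a; apply/asboolP => x _; exact: lexx.
- move=> a b c /asboolP hab /asboolP hbc; apply/asboolP => x hx.
  exact: le_trans (hbc x hx) (hab x hx).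
- move=> A hA.
  pose U : set ((Lam -> RR) -> RR) := fun u => u = P \/ exists2 s, A s & u = proj1_sig s.
  have hU1 : forall u, U u -> Tp u.
    move=> u [->|[s _ ->]]; last exact: proj2_sig.
    by split => // x _; exact: lexx.
  have hU2 : forall u1 u2, U u1 -> U u2 ->
      (forall x, linfty x -> u1 x <= u2 x) \/ (forall x, linfty x -> u2 x <= u1 x).
    move=> u1 u2 h1 h2.
    case: h1 => [->|[s1 hs1 ->]].
      by right; exact: (hU1 _ h2).2.
    case: h2 => [->|[s2 hs2 ->]].
      by left; exact: (proj2_sig s1).2.
    case: (hA _ _ hs1 hs2) => /asboolP h; [right|left]; exact: h.
  have UP : U P by left.
  pose E x := [set u x | u in U].
  have En : forall x, E x !=set0 by move=> x; exists (P x); exists P.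
  have Elb : forall x, linfty x -> forall e, E x e -> - P (vscl (-1) x) <= e.
    move=> x hx e [u hu <-].
    have := sublin_neg (hU1 _ hu).1 hx.
    have := (hU1 _ hu).2 _ (linfty_scl (-1) hx); lra.
  have Eel : forall x u, U u -> E x (u x) by move=> x u hu; exists u.
  pose qi x := inf (E x).
  have qile : forall x u, linfty x -> U u -> qi x <= u x.
    by move=> x u hx hu; apply: (inf_le_el (Elb x hx)); apply: Eel.
  have hqi : Tp qi.
    split; last by move=> x hx; apply: qile.
    split.
    - move=> x y hx hy; apply: le_inf_add => // a b [u1 h1 <-] [u2 h2 <-].
      have hxy := linfty_add hx hy.
      case: (hU2 _ _ h1 h2) => h.
      + apply: (le_trans (qile _ _ hxy h1)).
        apply: (le_trans ((hU1 _ h1).1.1 _ _ hx hy)).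
        by apply: lerD; [exact: lexx | exact: h].
      + apply: (le_trans (qile _ _ hxy h2)).
        apply: (le_trans ((hU1 _ h2).1.1 _ _ hx hy)).
        by apply: lerD; [exact: h | exact: lexx].
    - move=> a x ha hx; apply: le_inf_scale => // e [u hu <-].
      apply: (le_trans (qile _ _ (linfty_scl a hx) hu)).
      exact: (hU1 _ hu).1.2.
  exists (exist _ qi hqi) => s hs; apply/asboolP => x hx /=.
  by apply: qile => //; right; exists s.
- exists (proj1_sig t); case: t tmax => q [hq hqP] /= tmax.
  split; last exact: hqP.
  apply: odd_sublin_lin => //; apply: min_sublin_odd => // r hr hrq x hx.
  have hrT : Tp r by split => // z hz; exact: le_trans (hrq z hz) (hqP z hz).
  have := tmax (exist _ r hrT).
  have hR : R (exist _ q (conj hq hqP)) (exist _ r hrT) by apply/asboolP.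
  by move=> /(_ hR) /asboolP /(_ x hx).
Qed.

Lemma linfty_cst (Lam : Type) (k : RR) : linfty (fun _ : Lam => k).
Proof. by exists `|k| => l. Qed.

Definition pS (Lam : Type) (phi : Lam -> RR) : RR := sup (range phi).

Lemma pS_ub (Lam : Type) (phi : Lam -> RR) l : linfty phi -> phi l <= pS phi.
Proof.
move=> [M hM]; apply: ub_le_sup; last by exists l.
exists M => _ [k _ <-]; exact: le_trans (ler_norm _) (hM k).
Qed.

Lemma pS_le (Lam : Type) (l0 : Lam) (phi : Lam -> RR) M : (forall l, phi l <= M) -> pS phi <= M.
Proof.
move=> hM; apply: ge_sup; first by exists (phi l0), l0.
by move=> _ [k _ <-].
Qed.

Lemma supL_pS (Lam : Type) (phi : Lam -> RR) (l0 : Lam) : linfty phi -> supL phi = (pS phi)%:E.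
Proof.
move=> hphi; rewrite /supL /pS -ereal_sup_EFin.
- by rewrite image_comp.
- case: hphi => M hM; exists M => _ [k _ <-]; exact: le_trans (ler_norm _) (hM k).
- by exists (phi l0), l0.
Qed.

Lemma pS_shift (Lam : Type) (l0 : Lam) (phi : Lam -> RR) k : linfty phi ->
  pS (fun l => phi l + k) = pS phi + k.
Proof.
move=> hphi; apply/eqP; rewrite eq_le; apply/andP; split.
  by apply: (pS_le l0) => l; rewrite lerD2r; apply: pS_ub.
rewrite -lerBrDr; apply: (pS_le l0) => l; rewrite lerBrDr.
apply: (pS_ub (phi := fun l => phi l + k)).
exact: (linfty_add hphi (linfty_cst Lam k)).
Qed.

Lemma pS_sublin (Lam : Type) (l0 : Lam) : sublin (@pS Lam).
Proof.
split.
- move=> x y hx hy; apply: (pS_le l0) => l; rewrite /vadd.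
  by apply: lerD; apply: pS_ub.
- move=> a x ha hx; apply: (pS_le l0) => l; rewrite /vscl ler_pM2l //.
  exact: pS_ub.
Qed.

Lemma linfty_sum (Lam I : Type) (r : seq I) (t : I -> RR) (g : I -> Lam -> RR) :
  (forall i, linfty (g i)) -> linfty (fun l => \sum_(i <- r) t i * g i l).
Proof.
move=> hg; elim: r => [|i r ih].
  by under [fun l => _]funext do rewrite big_nil; apply: linfty_cst.
under [fun l => _]funext do rewrite big_cons.
exact: (linfty_add (linfty_scl (t i) (hg i)) ih).
Qed.

Lemma linL0 (Lam : Type) (Phi : (Lam -> RR) -> RR) : linL Phi -> Phi (fun _ => 0) = 0.
Proof.
move=> h; have := h 1 _ _ (linfty_cst Lam 0) (linfty_cst Lam 0).
have -> : (fun _ : Lam => 1 * 0 + 0) = (fun _ => 0 : RR).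
  by apply: funext => l; rewrite mulr0 addr0.
rewrite mul1r => e; lra.
Qed.

Lemma lin_sum (Lam I : Type) (Phi : (Lam -> RR) -> RR) (r : seq I) (t : I -> RR)
  (g : I -> Lam -> RR) : linL Phi -> (forall i, linfty (g i)) ->
  Phi (fun l => \sum_(i <- r) t i * g i l) = \sum_(i <- r) t i * Phi (g i).
Proof.
move=> hP hg; elim: r => [|i r ih].
  by under [fun l => _]funext do rewrite big_nil; rewrite big_nil linL0.
under [fun l => _]funext do rewrite big_cons.
by rewrite hP // ?ih ?big_cons //; apply: linfty_sum.
Qed.

Lemma linZ (Lam : Type) (Phi : (Lam -> RR) -> RR) a x : linL Phi -> linfty x ->
  Phi (vscl a x) = a * Phi x.
Proof.
move=> hP hx; have := hP a _ _ hx (linfty_cst Lam 0).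
have -> : (fun l => a * x l + 0) = vscl a x by apply: funext => l; rewrite addr0.
by rewrite linL0 // addr0.
Qed.

Lemma mazur (X Lam : Type) (l0 : Lam) (F : Lam -> X -> RR) (b : X -> RR) :
  (forall x, linfty (fun l => F l x)) ->
  (forall s : seq (RR * X), all (fun pr => 0 <= pr.1) s ->
      \sum_(pr <- s) pr.1 * b pr.2 <= pS (fun l => \sum_(pr <- s) pr.1 * F l pr.2)) ->
  exists Phi, linL Phi /\ (forall x, linfty x -> Phi x <= pS x) /\
     forall x, b x <= Phi (fun l => F l x).
Proof.
move=> hF hc.
pose G (s : seq (RR * X)) := fun l => \sum_(pr <- s) pr.1 * F l pr.2.
pose c (s : seq (RR * X)) := \sum_(pr <- s) pr.1 * b pr.2.
pose nn (s : seq (RR * X)) := all (fun pr : RR * X => 0 <= pr.1) s.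
pose sc (a : RR) (s : seq (RR * X)) := map (fun pr : RR * X => (a * pr.1, pr.2)) s.
have hG : forall s, linfty (G s).
  move=> s; have := (@linfty_sum Lam _ s fst (fun pr l => F l pr.2) (fun pr => hF pr.2)).
  by [].
have Gcat : forall s1 s2, G (s1 ++ s2) = vadd (G s1) (G s2).
  by move=> s1 s2; apply: funext => l; rewrite /G /vadd big_cat.
have ccat : forall s1 s2, c (s1 ++ s2) = c s1 + c s2 by move=> s1 s2; rewrite /c big_cat.
have Gsc : forall a s, G (sc a s) = vscl a (G s).
  move=> a s; apply: funext => l; rewrite /G /vscl big_map mulr_sumr.
  by apply: eq_bigr => pr _ /=; rewrite mulrA.
have csc : forall a s, c (sc a s) = a * c s.
  move=> a s; rewrite /c big_map mulr_sumr.
  by apply: eq_bigr => pr _ /=; rewrite mulrA.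
have nncat : forall s1 s2, nn s1 -> nn s2 -> nn (s1 ++ s2).
  by move=> s1 s2 h1 h2; rewrite /nn all_cat; apply/andP.
have nnsc : forall a s, 0 <= a -> nn s -> nn (sc a s).
  move=> a s ha; elim: s => [//|pr s ih] /= /andP [h1 h2].
  by apply/andP; split; [exact: mulr_ge0 | exact: ih].
have hpS := pS_sublin l0.
pose E phi := [set pS (vadd phi (G s)) - c s | s in nn].
have Eel : forall phi s, nn s -> E phi (pS (vadd phi (G s)) - c s).
  by move=> phi s hs; exists s.
have En : forall phi, E phi !=set0.
  by move=> phi; eexists; apply: (Eel phi [::]).
have Elb : forall phi, linfty phi -> forall e, E phi e -> - pS (vscl (-1) phi) <= e.
  move=> phi hphi e [s hs <-].
  have h1 := hc s hs.
  have e1 : G s = vadd (vadd phi (G s)) (vscl (-1) phi).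
    by apply: funext => l; rewrite /vadd /vscl; ring.
  have := hpS.1 _ _ (linfty_add hphi (hG s)) (linfty_scl (-1) hphi).
  rewrite -e1. 
  have -> : pS (G s) = pS (fun l => \sum_(pr <- s) pr.1 * F l pr.2) by [].
  move=> h2; rewrite /c; lra.
pose P' phi := inf (E phi).
have P'le : forall phi s, linfty phi -> nn s -> P' phi <= pS (vadd phi (G s)) - c s.
  by move=> phi s hphi hs; apply: (inf_le_el (Elb phi hphi)); apply: Eel.
have hP' : sublin P'.
  split.
  - move=> x y hx hy; apply: le_inf_add => // a b' [s1 h1 <-] [s2 h2 <-].
    apply: (le_trans (P'le _ _ (linfty_add hx hy) (nncat _ _ h1 h2))).
    rewrite Gcat ccat.
    have e1 : vadd (vadd x y) (vadd (G s1) (G s2)) = vadd (vadd x (G s1)) (vadd y (G s2)).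
      by apply: funext => l; rewrite /vadd; ring.
    rewrite e1.
    have := hpS.1 _ _ (linfty_add hx (hG s1)) (linfty_add hy (hG s2)).
    lra.
  - move=> a x ha hx; apply: le_inf_scale => // e [s hs <-].
    apply: (le_trans (P'le _ _ (linfty_scl a hx) (nnsc _ _ (ltW ha) hs))).
    rewrite Gsc csc.
    have e1 : vadd (vscl a x) (vscl a (G s)) = vscl a (vadd x (G s)).
      by apply: funext => l; rewrite /vadd /vscl; ring.
    rewrite e1 (sublin_hom hpS (ltW ha)); last exact: linfty_add.
    by rewrite mulrBr.
have [Phi [hlin hle]] := hahn_banach hP'.
exists Phi; split => //; split.
  move=> x hx; apply: (le_trans (hle x hx)).
  have := P'le x [::] hx isT.
  have -> : vadd x (G [::]) = x by apply: funext => l; rewrite /vadd /G big_nil addr0.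
  by rewrite /c big_nil subr0.
move=> x.
have h1 := hle _ (linfty_scl (-1) (hF x)).
have h2 := P'le _ [:: (1, x)] (linfty_scl (-1) (hF x)) ltac:(by rewrite /nn /= ler01).
have e1 : vadd (vscl (-1) (fun l => F l x)) (G [:: (1, x)]) = @vzero Lam.
  by apply: funext => l; rewrite /vadd /vscl /vzero /G big_cons big_nil /=; ring.
rewrite e1 sublin0 // /c big_cons big_nil /= in h2.
rewrite linZ // in h1.
lra.
Qed.

Lemma sum_fst_ge0 (X : Type) (s : seq (RR * X)) : all (fun pr => 0 <= pr.1) s ->
  0 <= \sum_(pr <- s) pr.1.
Proof.
elim: s => [|pr s ih] /=; first by rewrite big_nil.
by move=> /andP [h1 h2]; rewrite big_cons; apply: addr_ge0 => //; apply: ih.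
Qed.

Lemma zero_case (X Lam : Type) (F : Lam -> X -> RR) (g : X -> RR) (s : seq (RR * X)) :
  all (fun pr => 0 <= pr.1) s -> \sum_(pr <- s) pr.1 = 0 ->
  (forall l, \sum_(pr <- s) pr.1 * F l pr.2 = 0) /\ \sum_(pr <- s) pr.1 * g pr.2 = 0.
Proof.
elim: s => [|pr s ih] /=; first by move=> _ _; split => [l|]; rewrite big_nil.
move=> /andP [h1 h2]; rewrite big_cons => e.
have hT' := sum_fst_ge0 h2.
have p0 : pr.1 = 0 by lra.
have s0 : \sum_(pr <- s) pr.1 = 0 by lra.
have [ih1 ih2] := ih h2 s0.
by split => [l|]; rewrite big_cons ?ih1 ?ih2 p0 mul0r addr0.
Qed.

Lemma conv_comb (X Lam : Type) (x0 : X) (l0 : Lam) (f : X -> RR) (F : Lam -> X -> RR)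
  (hF : forall x : X, linfty (fun l => F l x)) (alpha : RR) :
  infsup_convex (fun l x => F l x - f x) ->
  (forall x, ((f x + alpha)%:E <= supL (fun l => F l x))%E) ->
  forall s : seq (RR * X), all (fun pr => 0 <= pr.1) s ->
  \sum_(pr <- s) pr.1 * (f pr.2 + alpha) <= pS (fun l => \sum_(pr <- s) pr.1 * F l pr.2).
Proof.
move=> hconv halpha s hs.
pose T := \sum_(pr <- s) pr.1.
have hT : 0 <= T.
  exact: sum_fst_ge0.
have hpS := pS_sublin l0.
have hG : linfty (fun l => \sum_(pr <- s) pr.1 * F l pr.2).
  by have := (@linfty_sum Lam _ s fst (fun pr l => F l pr.2) (fun pr => hF pr.2)).
have [T0|Tpos] := eqVneq T 0.
  have [h1 ->] := zero_case F (fun x => f x + alpha) hs T0.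
  have -> : (fun l => \sum_(pr <- s) pr.1 * F l pr.2) = @vzero Lam.
    by apply: funext => l; rewrite h1.
  by rewrite sublin0.
have Tgt : 0 < T by rewrite lt_neqAle eq_sym Tpos hT.
pose m := size s.
pose t (j : 'I_m) := T^-1 * (nth (0, x0) s j).1.
pose xs (j : 'I_m) := (nth (0, x0) s j).2.
have conv : forall g : RR * X -> RR,
    \sum_(pr <- s) g pr = \sum_(j < m) g (nth (0, x0) s j).
  by move=> g; rewrite (big_nth (0, x0)) big_mkord.
have hm : (0 < m)%N.
  rewrite lt0n; apply/negP => /eqP /size0nil s0.
  by move: Tgt; rewrite /T s0 big_nil ltxx.
have ht : forall j, 0 <= t j.
  move=> j; rewrite /t; apply: mulr_ge0; first by rewrite invr_ge0.
  by move/all_nthP: hs; apply => //; exact: ltn_ord.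
have hsum : \sum_(j < m) t j = 1.
  by rewrite /t -mulr_sumr -(conv fst) mulVf.
have hI := hconv m t xs hm ht hsum.
have hlow : (alpha%:E <= ereal_inf [set supL (fun l => (F l i - f i)%R) | i in setT])%E.
  apply: le_ereal_inf_tmp => _ [x _ <-].
  rewrite (supL_pS l0); last exact: (linfty_add (hF x) (linfty_cst Lam (- f x))).
  have e := pS_shift l0 (- f x) (hF x); simpl in e; rewrite e.
  by have := halpha x; rewrite (supL_pS l0 (hF x)) !lee_fin; lra.
pose K := \sum_(pr <- s) pr.1 * f pr.2.
have eh : (fun l => \sum_(j < m) t j * (F l (xs j) - f (xs j))) =
    vadd (vscl T^-1 (fun l => \sum_(pr <- s) pr.1 * F l pr.2)) (fun _ => - (T^-1 * K)).
  apply: funext => l; rewrite /vadd /vscl /K !conv.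
  rewrite !mulr_sumr -sumrB.
  by apply: eq_bigr => j _; rewrite /t /xs; ring.
rewrite eh in hI.
rewrite (supL_pS l0) in hI; last by apply: linfty_add; [apply: linfty_scl | apply: linfty_cst].
rewrite /vadd (pS_shift l0) in hI; last by apply: linfty_scl.
rewrite (sublin_hom hpS) in hI; [|by rewrite invr_ge0|by []].
have := le_trans hlow hI; rewrite lee_fin => hal.
have -> : \sum_(pr <- s) pr.1 * (f pr.2 + alpha) = K + T * alpha.
  by rewrite /K /T mulr_suml -big_split; apply: eq_bigr => pr _ /=; ring.
have : T * alpha <= T * (T^-1 * pS (fun l => \sum_(pr <- s) pr.1 * F l pr.2) + - (T^-1 * K)).
  by rewrite ler_pM2l.
rewrite mulrDr mulrN !mulrA mulfV // !mul1r.
lra.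
Qed.

Unset Implicit Arguments.
Local Close Scope classical_set_scope.

Theorem theorem3p2 (X Lam : Type) (x0 : X) (l0 : Lam)
  (f : X -> RR) (F : Lam -> X -> RR)
  (hF : forall x : X, linfty (fun l => F l x)) :
  infsup_convex (fun l x => F l x - f x) <->
  (forall alpha : RR,
     (forall x : X, ((f x + alpha)%:E <= supL (fun l => F l x))%E) ->
     exists Phi : (Lam -> RR) -> RR,
       DeltaL Phi /\ forall x : X, f x + alpha <= Phi (fun l => F l x)).
Proof.
split.
- move=> hconv alpha halpha.
  have [Phi [hlin [hle hb]]] :=
    mazur l0 (b := fun x => f x + alpha) hF (conv_comb x0 l0 hF hconv halpha).
  exists Phi; split; last exact: hb.
  split; first split.
  + exact: hlin.
  + exists 1 => phi M hM.
    have hphi : linfty phi by exists M.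
    rewrite mul1r ler_norml; apply/andP; split.
    * have h1 := hle _ (linfty_scl (-1) hphi).
      rewrite linZ // in h1.
      have h2 : pS (vscl (-1) phi) <= M.
        apply: (pS_le l0) => l; rewrite /vscl mulN1r.
        by have := hM l; rewrite ler_norml => /andP [h3 h4]; lra.
      lra.
    * apply: (le_trans (hle _ hphi)); apply: (pS_le l0) => l.
      exact: le_trans (ler_norm _) (hM l).
  + by move=> phi hphi; rewrite (supL_pS l0 hphi) lee_fin; exact: hle.
- move=> H m t xs hm ht hsum.
  have hg : forall x, supL (fun l => F l x - f x) = (pS (fun l => F l x) - f x)%:E.
    move=> x; rewrite (supL_pS l0); last exact: (linfty_add (hF x) (linfty_cst Lam (- f x))).
    by have e := pS_shift l0 (- f x) (hF x); simpl in e; rewrite e.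
  set I := ereal_inf _.
  have hlb : forall x, (I <= (pS (fun l => F l x) - f x)%:E)%E.
    by move=> x; rewrite -hg; apply: ereal_inf_lbound; exists x.
  case EI: I => [r| |].
  + have hr : forall x, r <= pS (fun l => F l x) - f x.
      by move=> x; have := hlb x; rewrite EI lee_fin.
    have [Phi [[[hlin _] hle] hPhi]] : exists Phi : (Lam -> RR) -> RR,
       DeltaL Phi /\ forall x : X, f x + r <= Phi (fun l => F l x).
      apply: H => x; rewrite (supL_pS l0 (hF x)) lee_fin.
      by have := hr x; lra.
    pose G' := fun l => \sum_(j < m) t j * F l (xs j).
    pose K := \sum_(j < m) t j * f (xs j).
    have hG' : linfty G'.
      exact: (@linfty_sum Lam _ _ t (fun j l => F l (xs j)) (fun j => hF (xs j))).
    have eh : (fun l => \sum_(j < m) t j * (F l (xs j) - f (xs j))) = vadd G' (fun _ => - K).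
      apply: funext => l; rewrite /vadd /G' /K -sumrN -big_split /=.
      by apply: eq_bigr => j _; ring.
    rewrite eh (supL_pS l0); last exact: (linfty_add hG' (linfty_cst Lam (- K))).
    rewrite /vadd (pS_shift l0) // lee_fin.
    have h1 : Phi G' = \sum_(j < m) t j * Phi (fun l => F l (xs j)).
      exact: (@lin_sum Lam _ Phi _ t (fun j l => F l (xs j)) hlin (fun j => hF (xs j))).
    have h2 := hle G' hG'; rewrite (supL_pS l0 hG') lee_fin in h2.
    have h3 : K + r <= \sum_(j < m) t j * Phi (fun l => F l (xs j)).
      have -> : K + r = \sum_(j < m) t j * (f (xs j) + r).
        by rewrite /K -[r in LHS]mul1r -hsum mulr_suml -big_split; apply: eq_bigr => j _ /=; ring.
      by apply: ler_sum => j _; apply: ler_wpM2l => //; exact: hPhi.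
    lra.
  + by have := hlb x0; rewrite EI.
  + exact: leNye.
Qed.
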